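(* Let $n\ge 2$ and $\sigma,\tau\in S_n$. Define $\delta(\sigma,\tau)=|\{x\in\{n-1,\sigma^{-1}(n-1),\tau^{-1}(n-1)\}:\sigma(x)\neq\tau(x)\}|$ and $\delta^{\sf CT}(\sigma,\tau)=|\{x\in\{\sigma^{-1}(n-1),\tau^{-1}(n-1)\}:\sigma^{\sf CT}(x)\neq\tau^{\sf CT}(x)\}|$. Then ${\rm hd}(\sigma,\tau)-{\rm hd}(\sigma^{\sf CT},\tau^{\sf CT})=\delta(\sigma,\tau)-\delta^{\sf CT}(\sigma,\tau)$.
   Context: $S_n$ is the symmetric group on $\{0,1,\ldots,n-1\}$; ${\rm hd}(\sigma,\tau)=|\{x:\sigma(x)\neq\tau(x)\}|$. The contraction of $\sigma\in S_n$ is $\sigma^{\sf CT}\in S_{n-1}$ (on $\{0,\ldots,n-2\}$) defined by $\sigma^{\sf CT}(x)=\sigma(n-1)$ if $x=\sigma^{-1}(n-1)$ and $\sigma^{\sf CT}(x)=\sigma(x)$ otherwise (i.e. delete $n-1$ from the cycle notation of $\sigma$). In the definition of $\delta^{\sf CT}$ only those elements of $\{\sigma^{-1}(n-1),\tau^{-1}(n-1)\}$ lying in $\{0,\ldots,n-2\}$ are considered (the symbol $n-1$ is not in the domain of the contractions). *)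

(* Defs.v *)
From mathcomp Require Import all_boot all_fingroup.
Set Implicit Arguments.
Local Open Scope group_scope. Unset Strict Implicit. Unset Printing Implicit Defensive.

(* S_{n+1} is modelled as {perm 'I_n.+1}; the symbol "n" of the paper
   (the largest point) is ord_max : 'I_n.+1. *)

Definition hd (T : finType) (s t : {perm T}) : nat := #|[set x | s x != t x]|.

Definition ct_nat n (s : {perm 'I_n.+1}) (x : 'I_n) : nat :=
  let y := s (widen_ord (leqnSn n) x) in
  if y == ord_max then nat_of_ord (s ord_max) else nat_of_ord y.

Lemma ct_nat_lt n (s : {perm 'I_n.+1}) (x : 'I_n) : ct_nat s x < n.
Proof.
rewrite /ct_nat; set w := widen_ord _ x.
have wn : w != ord_max by rewrite neq_ltn /= ltn_ord.
have ltmax : forall y : 'I_n.+1, y != ord_max -> y < n.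
  by move=> y; rewrite neq_ltn => /orP[/= h|h] //; move: (ltn_ord y); rewrite ltnS leqNgt h.
case: eqP => [E|/eqP E]; apply: ltmax => //.
apply/negP => /eqP E'; move: wn; rewrite -E' in E.
by rewrite (perm_inj E) eqxx.
Qed.

Definition ct_fun n (s : {perm 'I_n.+1}) (x : 'I_n) : 'I_n := Ordinal (ct_nat_lt s x).

Lemma ct_fun_inj n (s : {perm 'I_n.+1}) : injective (ct_fun s).
Proof.
move=> x y; rewrite /ct_fun => /(congr1 val) /=.
rewrite /ct_nat.
have wi : forall a b : 'I_n, widen_ord (leqnSn n) a = widen_ord (leqnSn n) b -> a = b.
  by move=> a b /(congr1 val) /= /val_inj.
have wn : forall a : 'I_n, widen_ord (leqnSn n) a != ord_max.
  by move=> a; rewrite neq_ltn /= ltn_ord.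
do 2 case: eqP.
- by move=> Ey Ex _; apply: wi; apply: (@perm_inj _ s); rewrite Ex Ey.
- move=> _ Ex /val_inj E; have : s ord_max = s (widen_ord (leqnSn n) y) by [].
  by move/perm_inj => E'; move: (wn y); rewrite -E' eqxx.
- move=> Ey _ /val_inj E; have : s (widen_ord (leqnSn n) x) = s ord_max by [].
  by move/perm_inj => E'; move: (wn x); rewrite E' eqxx.
- by move=> _ _ /val_inj /perm_inj; apply: wi.
Qed.

(* sigma^CT in S_n : delete the largest point from the cycle notation *)
Definition contract n (s : {perm 'I_n.+1}) : {perm 'I_n} := perm (@ct_fun_inj n s).

Definition delta n (s t : {perm 'I_n.+1}) : nat :=
  #|[set x in [set ord_max; s^-1 ord_max; t^-1 ord_max] | s x != t x]|.

Definition deltaCT n (s t : {perm 'I_n.+1}) : nat :=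
  #|[set x : 'I_n | ((widen_ord (leqnSn n) x == s^-1 ord_max) ||
                      (widen_ord (leqnSn n) x == t^-1 ord_max))
                    && (contract s x != contract t x)]|.

(* Main.v *)
Require Import Defs.
From mathcomp Require Import all_boot all_fingroup.
From mathcomp Require Import zify.

Theorem lemma4p1 (n : nat) (hn : 1 <= n) (s t : {perm 'I_n.+1}) :
  hd s t + deltaCT s t = hd (contract s) (contract t) + delta s t.
Proof.
Local Open Scope group_scope.
set w := widen_ord (leqnSn n).
have winj : injective w by move=> a b /(congr1 val) /= /val_inj.
have wn : forall a : 'I_n, w a != ord_max by move=> a; rewrite neq_ltn /= ltn_ord.
set S3 := [set ord_max; s^-1 ord_max; t^-1 ord_max].
set D := [set x | s x != t x].
set S2 := [set x : 'I_n | (w x == s^-1 ord_max) || (w x == t^-1 ord_max)].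
set D' := [set x : 'I_n | contract s x != contract t x].
have E1 : delta s t = #|D :&: S3|.
  by rewrite /delta; apply: eq_card => x; rewrite !inE andbC.
have E2 : deltaCT s t = #|D' :&: S2|.
  by rewrite /deltaCT; apply: eq_card => x; rewrite !inE andbC.
have E3 : D :\: S3 = w @: (D' :\: S2).
  apply/setP => y.
  case: (eqVneq y ord_max) => [->|yn].
    rewrite !inE eqxx /=; apply/esym/negbTE/imsetP => -[x _ E].
    by move: (wn x); rewrite -E eqxx.
  have [x ->] : exists x, y = w x.
    have yl : y < n.
      by move: yn; rewrite neq_ltn => /orP[//|h]; move: (ltn_ord y); rewrite ltnS leqNgt h.
    by exists (Ordinal yl); apply/val_inj.
  rewrite (mem_imset _ _ winj) !inE (negbTE (wn x)) /=.
  have Hs : (w x == s^-1 ord_max) = (s (w x) == ord_max).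
    by apply/eqP/eqP => [->|<-]; rewrite ?permKV ?permK.
  have Ht : (w x == t^-1 ord_max) = (t (w x) == ord_max).
    by apply/eqP/eqP => [->|<-]; rewrite ?permKV ?permK.
  rewrite Hs Ht.
  case: (eqVneq (s (w x)) ord_max) => //= Es.
  case: (eqVneq (t (w x)) ord_max) => //= Et.
  have Cs : val (contract s x) = val (s (w x)) by rewrite permE /= /ct_nat -/w (negbTE Es).
  have Ct : val (contract t x) = val (t (w x)) by rewrite permE /= /ct_nat -/w (negbTE Et).
  by rewrite -[contract s x == contract t x]val_eqE Cs Ct val_eqE.
rewrite /hd -/D -/D' E1 E2 -(cardsID S3 D) -(cardsID S2 D') E3 (card_imset _ winj).
by rewrite [RHS]addnC -addnA (addnC #|D' :\: S2|).
Qed.
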